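(* Let $p\in(0,1)$ and, for each integer $n\ge 1$, let $X_n$ be the maximum weight of a directed path from vertex $1$ to vertex $n$ in the transitive tournament on $\{1,\ldots,n\}$ whose edges carry independent $\mathrm{Bernoulli}(p)$ weights. Put $g(0)=1$ and $g(n)=1+\mathbb{E}[X_n]$ for $n\ge1$, and let $G_p(x)=\sum_{n\ge0}g(n)x^n$. Then, as formal power series in $x$, \[ G_p(x)=1+\frac{x}{(1-x)^2B_p(x)}, \qquad\text{where } B_p(x)=\sum_{n\ge0}(1-p)^{\binom{n+1}{2}}x^n. \]
   Context: The transitive tournament on $\{1,\ldots,n\}$ is the directed graph with vertex set $\{1,\ldots,n\}$ and a directed edge $(i,j)$ for every $1\le i<j\le n$. Each edge $(i,j)$ is given a weight $w(i,j)\in\{0,1\}$. These weights are independent, and each equals $1$ with probability $p$ and $0$ with probability $1-p$. The weight of a directed path is the sum of the weights of its edges. $X_n$ is the maximum weight over all directed paths from $1$ to $n$; the one-vertex path has weight $0$, so $X_1=0$. Binomial coefficients satisfy $\binom{0}{2}=\binom{1}{2}=0$. Because $B_p(x)$ has constant term $1$, it is invertible as a formal power series. *)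

(* Defs.v *)
From mathcomp Require Import all_boot all_order all_algebra.
Set Implicit Arguments. Unset Strict Implicit. Unset Printing Implicit Defensive.
Import Order.TTheory GRing.Theory Num.Theory.

Section FPS.
Local Open Scope ring_scope.
Variable R : fieldType.

Definition fps := nat -> R.
Definition fps_one : fps := fun n => if n is 0 then 1 else 0.
Definition fps_X : fps := fun n => if n is 1 then 1 else 0.
Definition fps_add (a b : fps) : fps := fun n => a n + b n.
Definition fps_sub (a b : fps) : fps := fun n => a n - b n.
Definition fps_mul (a b : fps) : fps :=
  fun n => \sum_(k < n.+1) a k * b (n - k)%N.

Fixpoint fps_inv_coefs (a : fps) (n : nat) : seq R :=
  match n with
  | 0 => [:: (a 0%N)^-1]
  | m.+1 => let s := fps_inv_coefs a m in
            rcons s (- (a 0%N)^-1 * \sum_(k < m.+1) a k.+1 * nth 0 s (m - k)%N)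
  end.
Definition fps_inv (a : fps) : fps := fun n => nth 0 (fps_inv_coefs a n) n.
End FPS.

(* Vertices {1,...,n} with n = m.+1 are encoded as 'I_m.+1 (vertex k+1 <-> k);
   vertex 1 is ord0 and vertex n is ord_max. A weight assignment is a boolean
   function on ordered pairs, required to vanish off the edge set {(i,j) | i<j}. *)
Definition weights (m : nat) := {ffun 'I_m.+1 * 'I_m.+1 -> bool}.

Definition valid_weights m (w : weights m) : bool :=
  [forall e : 'I_m.+1 * 'I_m.+1, ~~ (e.1 < e.2)%N ==> ~~ w e].

Definition path_weight m (w : weights m) (s : seq 'I_m.+1) : nat :=
  \sum_(e <- zip s (behead s)) nat_of_bool (w e).

(* the directed path from 1 to n whose set of vertices is {1,n} U A
   (directed paths in the transitive tournament = increasing vertex sequences) *)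
Definition path_of m (A : {set 'I_m.+1}) : seq 'I_m.+1 :=
  [seq i <- enum 'I_m.+1 | (i == ord0) || (i == ord_max) || (i \in A)].

(* X_n for n = m.+1 *)
Definition Xmax m (w : weights m) : nat :=
  \max_(A : {set 'I_m.+1}) path_weight w (path_of A).

Local Open Scope ring_scope.

Definition wprob (R : nzRingType) (p : R) m (w : weights m) : R :=
  \prod_(e : 'I_m.+1 * 'I_m.+1 | (e.1 < e.2)%N) (if w e then p else 1 - p).

(* E[X_n] for n = m.+1 *)
Definition EX (R : nzRingType) (p : R) m : R :=
  \sum_(w : weights m | valid_weights w) wprob p w * (Xmax w)%:R.

Definition gcoef (R : nzRingType) (p : R) (n : nat) : R :=
  if n is m.+1 then 1 + EX p m else 1.

Definition Bcoef (R : nzRingType) (p : R) (n : nat) : R := (1 - p) ^+ 'C(n.+1, 2).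

(* Main.v *)
Require Import Defs.
From mathcomp Require Import all_boot all_order all_algebra.
From Stdlib Require Import FunctionalExtensionality.
From mathcomp Require Import zify.

Module P2M.
Set Implicit Arguments. Unset Strict Implicit. Unset Printing Implicit Defensive.
Set Implicit Arguments. Unset Strict Implicit. Unset Printing Implicit Defensive.

Definition W := nat -> nat -> bool.
Fixpoint Fs (w : W) j : seq nat :=
  if j is j'.+1 then rcons (Fs w j') (\max_(i < j'.+1) (nth 0 (Fs w j') i + w i j'.+1))
  else [:: 0].
Definition F w j := nth 0 (Fs w j) j.

Lemma Fs_size w j : size (Fs w j) = j.+1.
Proof. by elim: j => //= j IH; rewrite size_rcons IH. Qed.

Lemma Fs_nth w j i : i <= j -> nth 0 (Fs w j) i = F w i.
Proof.
elim: j => [|j IH]; first by rewrite leqn0 => /eqP ->.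
rewrite leq_eqVlt => /orP [/eqP -> //|]; rewrite ltnS => hi.
by rewrite /= nth_rcons Fs_size ltnS hi IH.
Qed.

Lemma F0 w : F w 0 = 0.
Proof. by []. Qed.

Lemma FS w j : F w j.+1 = \max_(i < j.+1) (F w i + w i j.+1).
Proof.
rewrite /F /= nth_rcons Fs_size ltnn eqxx; apply: eq_bigr => i _.
by rewrite Fs_nth // -ltnS.
Qed.

Lemma F_step w i j : i < j -> F w i + w i j <= F w j.
Proof.
case: j => // j hi; rewrite FS.
exact: (@leq_bigmax _ (fun k : 'I_j.+1 => F w k + w k j.+1) (Ordinal hi)).
Qed.

Lemma F_mono w i j : i <= j -> F w i <= F w j.
Proof.
move=> hij; rewrite -(subnKC hij); elim: (j - i) => [|k IH]; first by rewrite addn0.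
apply: (leq_trans IH); rewrite addnS.
by apply: leq_trans (F_step w (ltnSn _)); rewrite leq_addr.
Qed.

Lemma F_le1 w j : F w j.+1 <= (F w j).+1.
Proof.
rewrite FS; apply/bigmax_leqP => i _.
rewrite -[(F w j).+1]addn1 leq_add //; first by apply: F_mono; rewrite -ltnS.
by case: (w _ _).
Qed.

Lemma F_arg w j : exists2 i, i < j.+1 & F w j.+1 = F w i + w i j.+1.
Proof.
rewrite FS; have [i0 ->] := @eq_bigmax _ (fun i : 'I_j.+1 => F w i + w i j.+1) (ltac:(by rewrite card_ord)).
by exists i0.
Qed.

Lemma Fs_local w1 w2 j : (forall a b, b <= j -> w1 a b = w2 a b) -> Fs w1 j = Fs w2 j.
Proof.
elim: j => [//|j IH] h /=.
rewrite IH; last by move=> a b hb; apply: h; rewrite (leq_trans hb).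
by congr rcons; apply: eq_bigr => i _; rewrite h.
Qed.

Lemma F_local w1 w2 j : (forall a b, b <= j -> w1 a b = w2 a b) -> F w1 j = F w2 j.
Proof. by move=> h; rewrite /F (Fs_local h). Qed.

Definition ext (w : W) m (c : {ffun 'I_m.+1 -> bool}) : W :=
  fun a b => if b == m.+1 then (a <= m) && c (inord a) else w a b.
Arguments ext w m c : clear implicits.

Lemma F_ext_le w m c i : i <= m -> F (ext w m c) i = F w i.
Proof.
move=> him; apply: F_local => a b hb; rewrite /ext.
by have -> : (b == m.+1) = false by apply/negbTE; rewrite neq_ltn ltnS (leq_trans hb him).
Qed.

Definition inc w m (c : {ffun 'I_m.+1 -> bool}) : bool :=
  [exists i : 'I_m.+1, (F w i == F w m) && c i].
Arguments inc w m c : clear implicits.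

Lemma F_ext w m c : F (ext w m c) m.+1 = F w m + inc w m c.
Proof.
rewrite FS.
have e : forall i : 'I_m.+1, F (ext w m c) i + ext w m c i m.+1 = F w i + c i.
  move=> i; rewrite F_ext_le; last by rewrite -ltnS.
  by rewrite /ext eqxx -ltnS ltn_ord /= inord_val.
rewrite (eq_bigr _ (fun i _ => e i)).
apply/eqP; rewrite eqn_leq; apply/andP; split.
  apply/bigmax_leqP => i _; rewrite /inc.
  case: (boolP [exists _, _]) => [_|/existsPn hn].
    rewrite addn1 -[(F w m).+1]addn1 leq_add //; first by rewrite F_mono // -ltnS.
    by case: (c i).
  have := hn i; rewrite negb_and; case: (c i); rewrite ?orbF ?orbT ?addn0 ?addn1.
    move=> hne; rewrite ltn_neqAle hne F_mono //; by rewrite -ltnS.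
  by move=> _; rewrite F_mono // -ltnS.
rewrite /inc; case: (boolP [exists _, _]) => [/existsP [i /andP [/eqP hi ci]]|_].
  apply: leq_trans (@leq_bigmax _ (fun i : 'I_m.+1 => F w i + c i) i).
  by rewrite hi ci.
apply: leq_trans (@leq_bigmax _ (fun i : 'I_m.+1 => F w i + c i) ord_max).
by rewrite addn0 leq_addr.
Qed.

Definition L w j := \sum_(i < j.+1) (F w i == F w j).

Lemma L_pos w j : 0 < L w j.
Proof. by rewrite /L big_ord_recr /= eqxx addn1. Qed.

Lemma L_le w j : L w j <= j.+1.
Proof.
rewrite /L; have := @leq_sum 'I_j.+1 (index_enum _) predT (fun i => nat_of_bool (F w i == F w j)) (fun _ => 1) (fun i _ => leq_b1 _).
by rewrite sum1_card card_ord.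
Qed.

Lemma L_ext w m c : L (ext w m c) m.+1 = if inc w m c then 1 else (L w m).+1.
Proof.
rewrite /L big_ord_recr /= eqxx addn1 F_ext.
case: (inc w m c) => /=.
  rewrite big1 // => i _; rewrite F_ext_le; last by rewrite -ltnS.
  rewrite addn1.
  suff -> : (F w i == (F w m).+1) = false by [].
  by apply/negbTE; rewrite neq_ltn ltnS F_mono // -ltnS.
rewrite addn0; congr (_.+1); apply: eq_bigr => i _; rewrite F_ext_le //; by rewrite -ltnS.
Qed.

End P2M.
Import P2M.

Module P4M.
Set Implicit Arguments. Unset Strict Implicit. Unset Printing Implicit Defensive.
Set Implicit Arguments. Unset Strict Implicit. Unset Printing Implicit Defensive.

Definition rw m (w : weights m) : W := fun a b => (a < b) && (b <= m) && w (inord a, inord b).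

Fixpoint pw (w : W) (s : seq nat) : nat :=
  if s is a :: t then (if t is b :: _ then w a b + pw w t else 0) else 0.

Lemma pw_cons2 w a b t : pw w (a :: b :: t) = w a b + pw w (b :: t).
Proof. by []. Qed.

Lemma pw_le w s a : path ltn a s -> pw w (a :: s) + F w a <= F w (last a s).
Proof.
elim: s a => [|b t IH] a; first by [].
rewrite [path _ _ _]/= => /andP [hab hp].
have h1 := IH b hp; have h2 := F_step w hab.
rewrite [last _ _]/= pw_cons2.
move: h1 h2; set P := pw w (b :: t); lia.
Qed.

Lemma pw_rcons w a s b : pw w (rcons (a :: s) b) = pw w (a :: s) + w (last a s) b.
Proof.
elim: s a => [|c t IH] a; first by rewrite /= addn0.
have -> : rcons (a :: c :: t) b = a :: c :: rcons t b by [].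
rewrite !pw_cons2 -addnA; congr (_ + _); exact: (IH c).
Qed.

Lemma pw_ex w j : exists s, [/\ path ltn 0 s, last 0 s = j & pw w (0 :: s) = F w j].
Proof.
elim: j {-2}j (leqnn j) => [|n IH] j hj.
  by move: hj; rewrite leqn0 => /eqP ->; exists [::].
case: j hj => [_|j hj]; first by exists [::].
have [i hi e] := F_arg w j.
have [s [hp hl hw]] := IH i (leq_trans hi hj).
exists (rcons s j.+1); split.
- by rewrite rcons_path hp hl; exact: hi.
- by rewrite last_rcons.
- by rewrite pw_rcons hl hw e.
Qed.

Lemma path_le_last a s : path ltn a s -> forall x, x \in a :: s -> x <= last a s.
Proof.
elim: s a => [|b t IH] a /=; first by move=> _ x; rewrite inE => /eqP ->.
case/andP => hab hp x; rewrite inE => /orP [/eqP ->|hx].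
  by apply: leq_trans (ltnW hab) (IH b hp b (mem_head _ _)).
exact: IH.
Qed.

Section Paths.
Variable m : nat.
Variable w : weights m.

Lemma path_weight_pw a t : path (fun i j : 'I_m.+1 => i < j) a t ->
  (\sum_(e <- zip (a :: t) t) w e)%N = pw (rw w) (map val (a :: t)).
Proof.
elim: t a => [|b t IH] a /=; first by rewrite big_nil.
case/andP => hab hp; rewrite big_cons IH //=; congr (_ + _).
by rewrite /rw hab -ltnS ltn_ord !inord_val.
Qed.

Lemma sorted_path_of (A : {set 'I_m.+1}) : sorted ltn (map val (path_of A)).
Proof.
rewrite sorted_map; apply: sorted_filter.
  by move=> x y z; apply: ltn_trans.
by rewrite -sorted_map val_enum_ord iota_ltn_sorted.
Qed.

Lemma path_weight_of (A : {set 'I_m.+1}) : path_weight w (path_of A) = pw (rw w) (map val (path_of A)).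
Proof.
rewrite /path_weight; case e: (path_of A) => [|a t]; first by rewrite big_nil.
rewrite path_weight_pw //.
by have := sorted_path_of A; rewrite e /= path_map.
Qed.

Lemma Xmax_F : Xmax w = F (rw w) m.
Proof.
apply/eqP; rewrite eqn_leq; apply/andP; split.
  apply/bigmax_leqP => A _; rewrite path_weight_of.
  have := sorted_path_of A; case e: (map val (path_of A)) => [//|a t] /= hp.
  apply: leq_trans (leq_addr (F (rw w) a) _) _.
  apply: leq_trans (pw_le (rw w) hp) _; apply: F_mono.
  have : last a t \in map val (path_of A) by rewrite e mem_last.
  by case/mapP => i _ ->; rewrite -ltnS ltn_ord.
have [s [hp hl hw]] := pw_ex (rw w) m.
pose A := [set i : 'I_m.+1 | val i \in s].
apply: leq_trans (@leq_bigmax _ (fun A => path_weight w (path_of A)) A).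
rewrite path_weight_of.
suff -> : map val (path_of A) = 0 :: s by rewrite hw.
apply: (irr_sorted_eq ltn_trans ltnn); first exact: sorted_path_of.
  exact: hp.
move=> k; apply/idP/idP.
  case/mapP => i; rewrite mem_filter => /andP [hP _] ->.
  case/orP: hP => [/orP [/eqP -> | /eqP ->]|]; first by rewrite mem_head.
    by rewrite /= -hl mem_last.
  by rewrite inE => hi; rewrite inE hi orbT.
move=> hk; have hkm : k < m.+1 by rewrite ltnS -hl; exact: path_le_last hp k hk.
apply/mapP; exists (Ordinal hkm) => //.
rewrite mem_filter mem_enum andbT.
move: hk; rewrite inE => /orP [/eqP hk0|hks].
  by apply/orP; left; apply/orP; left; apply/eqP; apply: val_inj; rewrite /= hk0.
by apply/orP; right; rewrite inE.
Qed.
End Paths.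

End P4M.
Import P4M.

Module P1M.
Set Implicit Arguments. Unset Strict Implicit. Unset Printing Implicit Defensive.
Set Implicit Arguments. Unset Strict Implicit. Unset Printing Implicit Defensive.
Import Order.TTheory GRing.Theory Num.Theory.
Local Open Scope ring_scope.

Section FpsAlg.
Variable R : fieldType.
Implicit Types a b c : fps R.

Lemma fps_mulC a b : fps_mul a b = fps_mul b a.
Proof.
apply: functional_extensionality => n; rewrite /fps_mul.
rewrite (reindex_inj rev_ord_inj) /=; apply: eq_bigr => i _.
rewrite subSS subKn; first exact: mulrC. by rewrite -ltnS.
Qed.

Lemma fps_mulA a b c : fps_mul (fps_mul a b) c = fps_mul a (fps_mul b c).
Proof.
apply: functional_extensionality => n.
rewrite /fps_mul.
transitivity (\sum_(k < n.+1) \sum_(j < n.+1 | (j <= k)%N) a j * b (k - j)%N * c (n - k)%N).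
  apply: eq_bigr => k _; rewrite mulr_suml.
  by rewrite (big_ord_widen n.+1 (fun j => a j * b (k - j)%N * c (n - k)%N)).
rewrite (exchange_big_dep predT) //=; apply: eq_bigr => j _.
rewrite mulr_sumr.
have -> : \sum_(i < n.+1 | true && (j <= i)%N) a j * b (i - j)%N * c (n - i)%N
   = \sum_(j <= i < n.+1) a j * b (i - j)%N * c (n - i)%N.
  by rewrite big_geq_mkord; apply: eq_bigl => i.
rewrite -{1}(add0n j) big_addn big_mkord subSn; last by rewrite -ltnS.
apply: eq_bigr => l _.
by rewrite addnK mulrA addnC subnDA.
Qed.

Definition fps_e : fps R := fps_sub (fps_one R) (fps_X R).

Lemma fps_mul_e a n :
  fps_mul fps_e a n = if n is n'.+1 then a n - a n' else a 0%N.
Proof.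
rewrite /fps_mul /fps_e /fps_sub /fps_one /fps_X.
case: n => [|n]; first by rewrite big_ord1 subr0 mul1r.
rewrite big_ord_recl /= subr0 mul1r subn0; case: n => [|n].
  by rewrite big_ord1 /= sub0r mulN1r.
rewrite big_ord_recl /= sub0r mulN1r big1 ?addr0 //.
by move=> i _; rewrite /= subrr mul0r.
Qed.

Lemma fps_inv_coefs_size a n : size (fps_inv_coefs a n) = n.+1.
Proof. by elim: n => //= n IH; rewrite size_rcons IH. Qed.

Lemma fps_inv_unique a h : a 0%N = 1 ->
  (forall n, fps_mul a h n = fps_one R n) -> forall n, fps_inv a n = h n.
Proof.
move=> a0 ah.
have key : forall n, fps_inv_coefs a n = [seq h i | i <- iota 0 n.+1].
  have iS k : iota 0 k.+1 = rcons (iota 0 k) k by rewrite -addn1 iotaD cats1.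
  elim=> [|n IH].
    rewrite /=; have := ah 0%N; rewrite /fps_mul big_ord1 a0 mul1r /fps_one => ->.
    by rewrite invr1.
  rewrite [in RHS]iS map_rcons -IH /=; congr rcons.
  have := ah n.+1; rewrite /fps_mul big_ord_recl /= a0 mul1r subn0 /fps_one => /eqP.
  rewrite addr_eq0 => /eqP ->; rewrite invr1 mulN1r; congr (- _).
  apply: eq_bigr => i _; rewrite /bump /= IH subSS (nth_map 0%N); last by rewrite size_iota ltnS leq_subr.
  by rewrite nth_iota ?add0n // ltnS leq_subr.
move=> n; rewrite /fps_inv key (nth_map 0%N) ?size_iota //.
by rewrite nth_iota.
Qed.
End FpsAlg.

End P1M.
Import P1M.

Module P3M.
Set Implicit Arguments. Unset Strict Implicit. Unset Printing Implicit Defensive.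
Set Implicit Arguments. Unset Strict Implicit. Unset Printing Implicit Defensive.
Import Order.TTheory GRing.Theory Num.Theory.
Local Open Scope ring_scope.

Lemma prod_bool (R : comRingType) (I : finType) (P : pred I) :
  \prod_i ((P i)%:R : R) = ([forall i, P i])%:R.
Proof.
case: (boolP [forall i, P i]) => [/forallP h | /forallPn [i hi]].
  by rewrite big1 // => i _; rewrite h.
by rewrite (bigD1 i) //= (negbTE hi) mul0r.
Qed.

Lemma card_sum_bool (I : finType) (P : pred I) :
  #|[pred i | P i]| = (\sum_i (P i : nat))%N.
Proof. rewrite -sum1_card big_mkcond; apply: eq_bigr => i _; rewrite inE; by case: (P i). Qed.

Section Markov.
Variable R : fieldType.
Variable p : R.
Local Notation q := (1 - p).

Definition cprob m (c : {ffun 'I_m.+1 -> bool}) : R :=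
  \prod_i (if c i then p else q).

Fixpoint Ex m (h : W -> R) : R :=
  match m with
  | 0 => h (fun _ _ => false)
  | m'.+1 => Ex m' (fun w => \sum_(c : {ffun 'I_m'.+1 -> bool}) cprob c * h (ext w m' c))
  end.

Lemma sum_cprob m : \sum_(c : {ffun 'I_m.+1 -> bool}) cprob c = 1.
Proof.
rewrite /cprob -(bigA_distr_bigA (fun (i : 'I_m.+1) (b : bool) => if b then p else q)).
by rewrite big1 // => i _; rewrite big_bool /= addrC subrK.
Qed.

Lemma sum_cprob_noinc m (S : pred 'I_m.+1) :
  \sum_(c : {ffun 'I_m.+1 -> bool}) cprob c * ([forall i, S i ==> ~~ c i])%:R = q ^+ #|[pred i | S i]|.
Proof.
transitivity (\sum_(c : {ffun 'I_m.+1 -> bool}) \prod_i ((if c i then p else q) * (if S i then (~~ c i)%:R else 1))).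
  apply: eq_bigr => c _; rewrite big_split /= -prod_bool; congr (_ * _).
  by apply: eq_bigr => i _; case: (S i).
rewrite -(bigA_distr_bigA (fun (i : 'I_m.+1) (b : bool) => (if b then p else q) * (if S i then (~~ b)%:R else 1))).
transitivity (\prod_(i : 'I_m.+1) (if S i then q else 1)).
  apply: eq_bigr => i _; rewrite big_bool /=.
  by case: (S i); rewrite /= ?mulr0 ?mulr1 ?add0r // addrC subrK.
by rewrite -big_mkcond /= -prodr_const.
Qed.

Lemma sum_cprob_inc w m :
  \sum_(c : {ffun 'I_m.+1 -> bool}) cprob c * (inc w m c)%:R = 1 - q ^+ L w m.
Proof.
have e : forall c, (inc w m c)%:R = 1 - ([forall i : 'I_m.+1, (F w i == F w m) ==> ~~ c i])%:R :> R.
  move=> c; rewrite /inc; case: (boolP [exists _, _]) => [/existsP [i /andP [hi ci]]|/existsPn hn].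
    case: (boolP [forall _, _]) => [/forallP h|_]; last by rewrite subr0.
    by have := h i; rewrite hi ci.
  case: (boolP [forall _, _]) => [_|/forallPn [i]]; first by rewrite subrr.
  rewrite negb_imply negbK => /andP [h1 h2]; by have := hn i; rewrite h1 h2.
rewrite (eq_bigr _ (fun c _ => congr1 (fun x => cprob c * x) (e c))).
rewrite (eq_bigr _ (fun c _ => mulrBr (cprob c) 1 _)) sumrB.
rewrite (eq_bigr _ (fun c _ => mulr1 (cprob c))) sum_cprob sum_cprob_noinc.
by rewrite card_sum_bool.
Qed.

Lemma Ex_eq m h1 h2 : (forall w, h1 w = h2 w) -> Ex m h1 = Ex m h2.
Proof.
elim: m h1 h2 => [|m IH] h1 h2 e /=; first exact: e.
by apply: IH => w; apply: eq_bigr => c _; rewrite e.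
Qed.

Lemma Ex_add m h1 h2 : Ex m (fun w => h1 w + h2 w) = Ex m h1 + Ex m h2.
Proof.
elim: m h1 h2 => [|m IH] h1 h2 //=.
rewrite -IH; apply: Ex_eq => w; rewrite -big_split /=.
by apply: eq_bigr => c _; rewrite mulrDr.
Qed.

Lemma Ex_scale m (x : R) h : Ex m (fun w => x * h w) = x * Ex m h.
Proof.
elim: m h => [|m IH] h //=.
rewrite -IH; apply: Ex_eq => w; rewrite mulr_sumr.
by apply: eq_bigr => c _; rewrite mulrCA.
Qed.

Lemma Ex_const m (x : R) : Ex m (fun _ => x) = x.
Proof.
elim: m x => [|m IH] x //=.
rewrite -[RHS](IH x); apply: Ex_eq => w.
by rewrite -mulr_suml sum_cprob mul1r.
Qed.

Lemma Ex_sub m h1 h2 : Ex m (fun w => h1 w - h2 w) = Ex m h1 - Ex m h2.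
Proof.
rewrite Ex_add -mulN1r -Ex_scale; congr (_ + _); apply: Ex_eq => w.
by rewrite mulN1r.
Qed.

Definition Fr m := Ex m (fun w => (F w m)%:R).
Definition acoef m k := Ex m (fun w => (L w m == k)%:R).
Definition u t := acoef t 1.

Lemma a_succ1 m : acoef m.+1 1 = Ex m (fun w => 1 - q ^+ L w m).
Proof.
rewrite /acoef /=; apply: Ex_eq => w; rewrite -sum_cprob_inc.
apply: eq_bigr => c _; rewrite L_ext; case: (inc w m c) => //=.
by rewrite eqSS eqn0Ngt L_pos.
Qed.

Lemma Fr_succ m : Fr m.+1 = Fr m + acoef m.+1 1.
Proof.
rewrite a_succ1 /Fr -Ex_add /=; apply: Ex_eq => w.
rewrite -sum_cprob_inc.
transitivity (\sum_(c : {ffun 'I_m.+1 -> bool}) (cprob c * (F w m)%:R + cprob c * (inc w m c)%:R)).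
  by apply: eq_bigr => c _; rewrite F_ext natrD mulrDr.
by rewrite big_split /= -mulr_suml sum_cprob mul1r.
Qed.

Lemma a_succ m k : acoef m.+1 k.+2 = q ^+ k.+1 * acoef m k.+1.
Proof.
rewrite /acoef /= -Ex_scale; apply: Ex_eq => w.
transitivity (\sum_(c : {ffun 'I_m.+1 -> bool}) (L w m == k.+1)%:R *
      (cprob c * ([forall i : 'I_m.+1, (F w i == F w m) ==> ~~ c i])%:R)).
  apply: eq_bigr => c _; rewrite L_ext /inc.
  case: (boolP [exists _, _]) => [/existsP [i /andP [hi ci]]|/existsPn hn].
    case: (boolP [forall _, _]) => [/forallP h|_]; last by rewrite /= !mulr0.
    by have := h i; rewrite hi ci.
  case: (boolP [forall _, _]) => [_|/forallPn [i]]; first by rewrite eqSS mulr1 mulrC.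
  rewrite negb_imply negbK => /andP [h1 h2]; by have := hn i; rewrite h1 h2.
rewrite -mulr_sumr sum_cprob_noinc card_sum_bool.
case: (boolP (L w m == k.+1)) => [/eqP h|_]; last by rewrite !mul0r mulr0.
by rewrite -h /L mul1r mulr1.
Qed.

Lemma L0 w : L w 0 = 1%N.
Proof. by rewrite /L big_ord1 eqxx. Qed.

Lemma u0 : u 0 = 1.
Proof. by rewrite /u /acoef /= L0. Qed.

Lemma Fr0 : Fr 0 = 0.
Proof. by []. Qed.

Lemma a_closed m k : (k <= m)%N -> acoef m k.+1 = u (m - k) * q ^+ 'C(k.+1, 2).
Proof.
elim: m k => [|m IH] k.
  by rewrite leqn0 => /eqP ->; rewrite bin_small // expr0 mulr1.
case: k => [_|k hk]; first by rewrite bin_small // expr0 mulr1 subn0.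
rewrite a_succ IH // subSS [in RHS]binS bin1 exprD mulrCA; congr (_ * _).
by rewrite mulrC.
Qed.

Lemma sum_ind (x m : nat) : (0 < x)%N -> (x <= m.+1)%N ->
  \sum_(k < m.+1) ((x == k.+1)%:R : R) = 1.
Proof.
move=> h1 h2.
have hx : (x.-1 < m.+1)%N by rewrite prednK.
rewrite (bigD1 (Ordinal hx)) //= prednK // eqxx big1 ?addr0 // => k hk.
case: eqP => // e; move: hk; suff -> : k = Ordinal hx by rewrite eqxx.
by apply: val_inj; rewrite /= e.
Qed.

Lemma Ex_sum m K (h : 'I_K -> W -> R) :
  Ex m (fun w => \sum_(k < K) h k w) = \sum_(k < K) Ex m (h k).
Proof.
elim: K h => [|K IH] h.
  transitivity (Ex m (fun _ => 0)); first by apply: Ex_eq => w; rewrite big_ord0.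
  by rewrite Ex_const big_ord0.
rewrite big_ord_recr /= -IH -Ex_add; apply: Ex_eq => w.
by rewrite big_ord_recr.
Qed.

Lemma a_total m : \sum_(k < m.+1) acoef m k.+1 = 1.
Proof.
rewrite /acoef -Ex_sum; transitivity (Ex m (fun _ => 1)); last exact: Ex_const.
by apply: Ex_eq => w; rewrite sum_ind // ?L_pos ?L_le.
Qed.

Lemma renewal m : \sum_(k < m.+1) Bcoef p k * u (m - k) = 1.
Proof.
rewrite -(a_total m); apply: eq_bigr => k _.
rewrite a_closed; last by rewrite -ltnS.
by rewrite mulrC.
Qed.

Lemma Hpart m : 1 + Fr m = \sum_(t < m.+1) u t.
Proof.
elim: m => [|m IH]; first by rewrite Fr0 big_ord1 u0 addr0.
by rewrite Fr_succ addrA IH [in RHS]big_ord_recr.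
Qed.
End Markov.

End P3M.
Import P3M.

Module P5M.
Set Implicit Arguments. Unset Strict Implicit. Unset Printing Implicit Defensive.
Set Implicit Arguments. Unset Strict Implicit. Unset Printing Implicit Defensive.
Import Order.TTheory GRing.Theory Num.Theory.

Lemma inord_w m (k : 'I_m.+1) : nat_of_ord (inord k : 'I_m.+2) = k.
Proof. by rewrite inordK //; apply: leqW (ltn_ord k). Qed.

Lemma inord_w_max m (k : 'I_m.+1) : ((inord k : 'I_m.+2) == ord_max) = false.
Proof. by apply/negbTE; rewrite -val_eqE /= inord_w neq_ltn ltn_ord. Qed.

Lemma inord_back m (k : 'I_m.+1) : (inord (nat_of_ord (inord k : 'I_m.+2)) : 'I_m.+1) = k.
Proof. by rewrite inord_w inord_val. Qed.

Lemma inord_i2 m (i : 'I_m.+2) : (i <= m)%N -> (inord (nat_of_ord (inord i : 'I_m.+1)) : 'I_m.+2) = i.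
Proof.
move=> h; apply: val_inj => /=; rewrite inordK; first by rewrite inordK.
by rewrite inordK // ltnW.
Qed.

Lemma ord_max_val m (j : 'I_m.+2) : (j == ord_max) = (nat_of_ord j == m.+1).
Proof. by rewrite -val_eqE. Qed.

Lemma valid_false m (w : weights m) : valid_weights w ->
  forall e : 'I_m.+1 * 'I_m.+1, ~~ (e.1 < e.2)%N -> w e = false.
Proof. by move/forallP => h e he; apply/negbTE; exact: (implyP (h e) he). Qed.

Definition glue m (x : weights m * {ffun 'I_m.+1 -> bool}) : weights m.+1 :=
  [ffun e : 'I_m.+2 * 'I_m.+2 => if e.2 == ord_max then (e.1 < e.2)%N && x.2 (inord e.1)
     else [&& (e.1 <= m)%N, (e.2 <= m)%N & x.1 (inord e.1, inord e.2)]].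

Definition splitw m (w : weights m.+1) : weights m * {ffun 'I_m.+1 -> bool} :=
  ([ffun e : 'I_m.+1 * 'I_m.+1 => w (inord e.1, inord e.2)],
   [ffun i : 'I_m.+1 => w (inord i, ord_max)]).

Lemma glueK m x : splitw (glue (m:=m) x) = x.
Proof.
case: x => w c; rewrite /splitw /glue; congr pair.
  apply/ffunP => -[i j] /=; rewrite !ffunE /=.
  by rewrite inord_w_max !inord_w !leq_ord /= !inord_val.
apply/ffunP => i; rewrite !ffunE /= eqxx inord_w ltn_ord /= inord_val //.
Qed.

Lemma splitK m (w : weights m.+1) : valid_weights w -> glue (splitw w) = w.
Proof.
move=> hv; have hf := valid_false hv.
apply/ffunP => -[i j]; rewrite /glue /splitw !ffunE /=.
case: eqP => [->|/eqP hj].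
  case: (ltnP i ord_max) => hi /=.
    by rewrite inord_i2.
  have -> : i = ord_max by apply: val_inj; apply/eqP; rewrite eqn_leq leq_ord hi.
  by rewrite hf //= ltnn.
have hjm : (j <= m)%N by move: hj; rewrite ord_max_val -ltnS ltn_neqAle leq_ord andbT.
rewrite hjm /=; case: (leqP i m) => hi /=.
  by rewrite inord_i2 // inord_i2.
by rewrite hf //= -leqNgt (leq_trans hjm (ltnW hi)).
Qed.

Lemma valid_glue m x : valid_weights (glue (m:=m) x) = valid_weights x.1.
Proof.
apply/idP/idP => hv.
  apply/forallP => -[i j] /=; apply/implyP => hij.
  have := @valid_false _ _ hv ((inord i : 'I_m.+2), (inord j : 'I_m.+2)); rewrite /= !inord_w => /(_ hij).
  by rewrite /glue ffunE /= inord_w_max !inord_w !leq_ord /= !inord_val => ->.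
have hf := valid_false hv.
apply/forallP => -[i j] /=; apply/implyP => hij; rewrite /glue ffunE /=.
case: (j == ord_max); first by rewrite (negbTE hij).
case: (leqP i m) => hi //=; case: (leqP j m) => hj //=.
have := hf ((inord i : 'I_m.+1), (inord j : 'I_m.+1)); rewrite /= !inordK // => /(_ hij) ->.
by [].
Qed.

Local Open Scope ring_scope.

Lemma wprob_pair (R : fieldType) (p : R) n (w : weights n) :
  wprob p w = \prod_(i : 'I_n.+1) \prod_(j : 'I_n.+1 | (i < j)%N) (if w (i, j) then p else 1 - p).
Proof.
rewrite (pair_big_dep predT (fun i j : 'I_n.+1 => (i < j)%N) (fun i j => if w (i, j) then p else 1 - p)) /wprob.
by apply: eq_big => [[i j]|[i j] _].
Qed.

Lemma wprob_glue (R : fieldType) (p : R) m x :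
  wprob p (glue (m:=m) x) = wprob p x.1 * cprob p x.2.
Proof.
rewrite !wprob_pair /cprob big_ord_recr /=.
rewrite [X in _ * X]big1; last by move=> j; rewrite ltnNge leq_ord.
rewrite mulr1 -big_split; apply: eq_bigr => i _ /=.
rewrite big_mkcond big_ord_recr /= -big_mkcond /=.
congr (_ * _).
  apply: eq_bigr => j _; rewrite /glue ffunE /=.
  have -> : (widen_ord (leqnSn m.+1) j == ord_max) = false.
    by apply/negbTE; rewrite ord_max_val /= neq_ltn ltn_ord.
  by rewrite !leq_ord /= !inord_val.
rewrite ltn_ord /glue ffunE /= eqxx ltn_ord /= inord_val //.
Qed.

Lemma rw_glue m x : rw (glue (m:=m) x) = ext (rw x.1) m x.2.
Proof.
apply: functional_extensionality => a; apply: functional_extensionality => b.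
rewrite /rw /ext /glue.
case: eqP => [->|/eqP hb].
  rewrite leqnn andbT ffunE /=.
  have -> : (inord m.+1 : 'I_m.+2) == ord_max by rewrite ord_max_val inordK.
  case: (ltnP a m.+1) => ha /=; last by rewrite leqNgt ha.
  rewrite !inordK //; by rewrite ltnS ltnW.
case: (ltnP a b) => hab //=.
case: (leqP b m.+1) => hb1 /=.
  have hbm : (b <= m)%N by move: hb1; rewrite leq_eqVlt (negbTE hb).
  rewrite hbm ffunE /=.
  have -> : ((inord b : 'I_m.+2) == ord_max) = false.
    by apply/negbTE; rewrite ord_max_val inordK // ltnS ltnW.
  have ham : (a <= m)%N by rewrite (leq_trans (ltnW hab) hbm).
  have ha2 : (a < m.+2)%N by rewrite ltnS leqW.
  have hb2 : (b < m.+2)%N by rewrite ltnS leqW.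
  by rewrite !inordK // ham hbm.
have -> : (b <= m)%N = false by apply/negbTE; rewrite -ltnNge ltnW.
by [].
Qed.

Lemma valid0 (w : weights 0) : valid_weights w = (w == [ffun => false]).
Proof.
apply/idP/eqP => [hv|->].
  apply/ffunP => -[i j]; rewrite ffunE.
  have -> : i = ord0 by apply: ord1.
  have -> : j = ord0 by apply: ord1.
  by rewrite (valid_false hv).
by apply/forallP => e; rewrite ffunE implybT.
Qed.

Lemma A2 (R : fieldType) (p : R) m (phi : W -> R) :
  \sum_(w : weights m | valid_weights w) wprob p w * phi (rw w) = Ex p m phi.
Proof.
elim: m phi => [|m IH] phi.
  rewrite (big_pred1 [ffun => false]); last by move=> w; rewrite valid0.
  rewrite /= /wprob big_pred0; last by move=> -[i j]; rewrite (ord1 i) (ord1 j).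
  rewrite mul1r; congr phi.
  apply: functional_extensionality => a; apply: functional_extensionality => b.
  rewrite /rw; case: b => [|b] /=; first by [].
  by rewrite ffunE andbF.
rewrite (reindex_onto (@glue m) (@splitw m)); last by move=> w hv; rewrite splitK.
rewrite (eq_bigl (fun x => valid_weights x.1)); last by move=> x; rewrite valid_glue glueK eqxx andbT.
rewrite (eq_bigr (fun x => wprob p x.1 * (cprob p x.2 * phi (ext (rw x.1) m x.2)))); last first.
  by move=> x _; rewrite wprob_glue rw_glue mulrA.
transitivity (\sum_(w : weights m | valid_weights w) \sum_(c : {ffun 'I_m.+1 -> bool})
     wprob p w * (cprob p c * phi (ext (rw w) m c))).
  rewrite pair_big_dep /=; apply: eq_bigl => x; by rewrite andbT.
rewrite /= -IH; apply: eq_bigr => w _; by rewrite mulr_sumr.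
Qed.

Lemma EX_Fr (R : fieldType) (p : R) m : EX p m = Fr p m.
Proof.
rewrite /EX /Fr -A2; apply: eq_bigr => w _; by rewrite Xmax_F.
Qed.

End P5M.
Import P5M.

Module P6M.
Set Implicit Arguments. Unset Strict Implicit. Unset Printing Implicit Defensive.
Set Implicit Arguments. Unset Strict Implicit. Unset Printing Implicit Defensive.
Import Order.TTheory GRing.Theory Num.Theory.
Local Open Scope ring_scope.

Section Final.
Variable R : realFieldType.
Variable p : R.

Definition Hs : fps R := fun n => \sum_(t < n.+1) u p t.
Definition one1 : fps R := fun _ => 1.

Lemma diffH : fps_mul (fps_e R) Hs = u p.
Proof.
apply: functional_extensionality => n; rewrite fps_mul_e /Hs.
case: n => [|n]; first by rewrite big_ord1.
by rewrite big_ord_recr /= addrC addrK.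
Qed.

Lemma ren : fps_mul (Bcoef p) (u p) = one1.
Proof. by apply: functional_extensionality => n; rewrite /fps_mul renewal. Qed.

Lemma diff1 : fps_mul (fps_e R) one1 = fps_one R.
Proof.
apply: functional_extensionality => n; rewrite fps_mul_e /one1 /fps_one.
by case: n => [|n]; rewrite ?subrr.
Qed.

Lemma DH n : fps_mul (fps_mul (fps_mul (fps_e R) (fps_e R)) (Bcoef p)) Hs n = fps_one R n.
Proof.
rewrite !fps_mulA -(fps_mulA (fps_e R) (Bcoef p) Hs) (fps_mulC (fps_e R) (Bcoef p)).
by rewrite fps_mulA diffH ren diff1.
Qed.

Lemma D0 : fps_mul (fps_mul (fps_e R) (fps_e R)) (Bcoef p) 0%N = 1.
Proof.
rewrite /fps_mul !big_ord1 /fps_e /fps_sub /fps_one /fps_X /Bcoef /=.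
by rewrite subr0 !mul1r bin_small // expr0.
Qed.
End Final.

End P6M.
Import P6M.

Unset Implicit Arguments.
Import Order.TTheory GRing.Theory Num.Theory.
Local Open Scope ring_scope.

Theorem theorem2 (R : realFieldType) (p : R) (hp0 : 0 < p) (hp1 : p < 1) :
  forall n : nat,
    gcoef p n =
    fps_add (fps_one R)
      (fps_mul (fps_X R)
         (fps_inv (fps_mul (fps_mul (fps_sub (fps_one R) (fps_X R))
                                    (fps_sub (fps_one R) (fps_X R)))
                           (Bcoef p)))) n.
Proof.
move=> n; rewrite -/(fps_e R).
have hinv := fps_inv_unique (D0 p) (DH p).
rewrite /fps_add /fps_mul big_ord_recl /fps_X /= mul0r add0r.
case: n => [|m]; first by rewrite big_ord0 /fps_one addr0.
rewrite big_ord_recl /= mul1r big1 ?addr0; last by move=> i _; rewrite mul0r.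
rewrite /fps_one add0r subn1 /= -/(fps_mul _ _) hinv /Hs -Hpart /=.
by rewrite EX_Fr.
Qed.
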